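(* Let $\Delta=\{x_0,\dots,x_d\}$ and $\Delta'=\{y_0,\dots,y_d\}$ be vertex sets of two regular simplices of edge length $1$ in $\mathbb{R}^d$. If $\mathrm{diam}(\Delta\cup\Delta')=1$, then $\Delta=\Delta'$.
   Context: A regular simplex of edge length $1$ in $\mathbb{R}^d$ is given by its vertex set: $d+1$ points at pairwise Euclidean distance exactly $1$. $\mathrm{diam}(A)=\sup_{x,y\in A}\|x-y\|_2$. *)

(* Defs.v *)
From mathcomp Require Import all_boot all_order all_algebra.
From mathcomp Require Import all_classical all_reals.
Set Implicit Arguments. Unset Strict Implicit. Unset Printing Implicit Defensive.
Import Order.TTheory GRing.Theory Num.Theory.
Local Open Scope ring_scope.
Local Open Scope classical_set_scope.

Definition edist (R : realType) (d : nat) (u v : 'rV[R]_d) : R :=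
  Num.sqrt (\sum_(k < d) (u ord0 k - v ord0 k) ^+ 2).

Definition diam (R : realType) (d : nat) (A : set 'rV[R]_d) : R :=
  sup [set edist p q | p in A & q in A].

Definition regular_unit_simplex (R : realType) (d : nat)
  (x : 'I_d.+1 -> 'rV[R]_d) : Prop :=
  forall i j : 'I_d.+1, i != j -> edist (x i) (x j) = 1.

(* Main.v *)
Require Import Defs.
From mathcomp Require Import all_boot all_order all_algebra.
From mathcomp Require Import all_classical all_reals.
From mathcomp Require Import ring lra.
Import Order.TTheory GRing.Theory Num.Theory.
Local Open Scope ring_scope.
Local Open Scope classical_set_scope.
Set Implicit Arguments. Unset Strict Implicit. Unset Printing Implicit Defensive.

Section Dot.
Variables (R : realType) (d : nat).
Implicit Types (u v w : 'rV[R]_d) (a : R).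

Definition dot u v : R := \sum_k u ord0 k * v ord0 k.

Lemma dotC u v : dot u v = dot v u.
Proof. by apply: eq_bigr => k _; rewrite mulrC. Qed.

Lemma dotDl u v w : dot (u + v) w = dot u w + dot v w.
Proof. by rewrite /dot -big_split; apply: eq_bigr => k _; rewrite mxE mulrDl. Qed.

Lemma dotNl u v : dot (- u) v = - dot u v.
Proof. by rewrite /dot -sumrN; apply: eq_bigr => k _; rewrite mxE mulNr. Qed.

Lemma dotBl u v w : dot (u - v) w = dot u w - dot v w.
Proof. by rewrite dotDl dotNl. Qed.

Lemma dotZl a u v : dot (a *: u) v = a * dot u v.
Proof. by rewrite /dot mulr_sumr; apply: eq_bigr => k _; rewrite mxE mulrA. Qed.

Lemma dotDr u v w : dot w (u + v) = dot w u + dot w v.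
Proof. by rewrite dotC dotDl !(dotC w). Qed.
Lemma dotBr u v w : dot w (u - v) = dot w u - dot w v.
Proof. by rewrite dotC dotBl !(dotC w). Qed.
Lemma dotZr a u v : dot v (a *: u) = a * dot v u.
Proof. by rewrite dotC dotZl dotC. Qed.

Lemma dot_suml (I : finType) (F : I -> 'rV[R]_d) v :
  dot (\sum_i F i) v = \sum_i dot (F i) v.
Proof.
rewrite /dot exchange_big /=; apply: eq_bigr => k _.
by rewrite summxE mulr_suml.
Qed.

Lemma dot_sumr (I : finType) (F : I -> 'rV[R]_d) v :
  dot v (\sum_i F i) = \sum_i dot v (F i).
Proof. by rewrite dotC dot_suml; apply: eq_bigr => i _; rewrite dotC. Qed.

Lemma dot_ge0 u : 0 <= dot u u.
Proof. by apply: sumr_ge0 => k _; rewrite -expr2 sqr_ge0. Qed.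

Lemma dot_eq0 u : dot u u = 0 -> u = 0.
Proof.
move=> H; apply/rowP => k; rewrite mxE.
have H0 : forall i : 'I_d, true -> 0 <= u ord0 i * u ord0 i.
  by move=> i _; rewrite -expr2 sqr_ge0.
have := psumr_eq0P H0 H (i:=k) isT.
by move/eqP; rewrite mulf_eq0 orbb => /eqP.
Qed.

Lemma edistE u v : edist u v = Num.sqrt (dot (u - v) (u - v)).
Proof. by rewrite /edist /dot; congr Num.sqrt; apply: eq_bigr => k _; rewrite !mxE expr2. Qed.

Lemma dot_sq u v : dot (u - v) (u - v) = dot u u - 2 * dot u v + dot v v.
Proof. rewrite !dotBl !dotBr (dotC v u); ring. Qed.

End Dot.
Local Close Scope classical_set_scope.

Lemma sum_delta (R : realType) m (f : 'I_m -> R) j :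
  \sum_i f i * (i == j)%:R = f j.
Proof.
rewrite (bigD1 j) //= eqxx mulr1 big1 ?addr0 // => i /negbTE ->; by rewrite mulr0.
Qed.

Lemma sum_delta' (R : realType) m (f : 'I_m -> R) j :
  \sum_i f i * (j == i)%:R = f j.
Proof. by rewrite -(sum_delta f j); apply: eq_bigr => i _; rewrite eq_sym. Qed.

Lemma sq_sum (R : realType) m (f : 'I_m -> R) :
  (\sum_i f i) ^+ 2 = \sum_i f i ^+ 2 + \sum_a \sum_(b | b != a) f a * f b.
Proof.
rewrite expr2 mulr_suml -big_split; apply: eq_bigr => a _.
by rewrite mulr_sumr (bigD1 a) //= expr2.
Qed.

Lemma cross_ge0 (R : realType) m (f : 'I_m -> R) :
  (forall i, 0 <= f i) -> 0 <= \sum_a \sum_(b | b != a) f a * f b.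
Proof. by move=> H; apply: sumr_ge0 => a _; apply: sumr_ge0 => b _; apply: mulr_ge0. Qed.

Lemma sum_deltaC (R : realType) m (c : R) (i : 'I_m) :
  \sum_j c * (i == j)%:R = c.
Proof.
rewrite (bigD1 i) //= eqxx mulr1 big1 ?addr0 // => j; rewrite eq_sym => /negbTE ->.
by rewrite mulr0.
Qed.

Section Frame.
Variables (R : realType) (d : nat) (x : 'I_d.+1 -> 'rV[R]_d).
Hypothesis Hx : forall i j, i != j -> dot (x i - x j) (x i - x j) = 1.

Definition wid (i : 'I_d) : 'I_d.+1 := widen_ord (leqnSn d) i.
Definition u (i : 'I_d) : 'rV[R]_d := x (wid i) - x ord_max.

Lemma wid_max i : wid i != ord_max.
Proof. by rewrite -val_eqE /= neq_ltn ltn_ord. Qed.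

Lemma wid_inj i j : (wid i == wid j) = (i == j).
Proof. by rewrite -!val_eqE. Qed.

Lemma uu i j : dot (u i) (u j) = ((i == j)%:R + 1) / 2.
Proof.
have Hi : dot (u i) (u i) = 1 by apply: Hx; exact: wid_max.
have Hj : dot (u j) (u j) = 1 by apply: Hx; exact: wid_max.
case: (eqVneq i j) => [<-|nij]; first by rewrite Hi /= -[1 + 1]/(2%:R) divff // pnatr_eq0.
have : dot (u i - u j) (u i - u j) = 1.
  rewrite /u opprB addrA subrK.
  by apply: Hx; rewrite wid_inj.
rewrite dot_sq Hi Hj /= => H.
have -> : dot (u i) (u j) = 1/2 by lra.
by rewrite add0r.
Qed.

Lemma nP1 : 1 + d%:R != 0 :> R.
Proof. have := ler0n R d; move=> H; apply/eqP; lra. Qed.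

Definition Umx : 'M[R]_d := \matrix_(i, k) u i ord0 k.
Definition Kmx : 'M[R]_d := \matrix_(i, j) (2 * ((i == j)%:R - (d.+1)%:R^-1)).

Lemma KmxE i j : Kmx i j = 2 * ((i == j)%:R - (d.+1)%:R^-1).
Proof. by rewrite mxE. Qed.

Lemma nP : (d.+1)%:R != 0 :> R.
Proof. by rewrite pnatr_eq0. Qed.

Lemma UUK : Umx *m Umx^T *m Kmx = 1%:M.
Proof.
apply/matrixP => i j; rewrite !mxE.
have E : forall l, (Umx *m Umx^T) i l = dot (u i) (u l).
  by move=> l; rewrite !mxE; apply: eq_bigr => k _; rewrite !mxE.
under eq_bigr => l _ do rewrite E uu mxE.
have -> : \sum_l ((i == l)%:R + 1 : R) / 2 * (2 * ((l == j)%:R - (d.+1)%:R^-1))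
   = \sum_l ((l == j)%:R - (d.+1)%:R^-1) * (i == l)%:R
     + \sum_l ((l == j)%:R - (d.+1)%:R^-1).
  rewrite -big_split /=; apply: eq_bigr => l _; field; exact: nP1.
have H1 := sum_delta' (fun l => (l == j)%:R - (d.+1)%:R^-1 : R) i.
rewrite /= in H1. rewrite H1 sumrB.
have H2 := sum_delta (fun l => 1 : R) j.
rewrite /= in H2; under eq_bigr => l _ do rewrite -[(l == j)%:R]mul1r.
rewrite H2 sumr_const card_ord -mulr_natr; field; exact: nP1.
Qed.


Lemma UKU : Umx^T *m Kmx *m Umx = 1%:M.
Proof. by apply: mulmx1C; rewrite mulmxA UUK. Qed.

Lemma frame z : dot z z =
  2 * (\sum_i dot z (u i) ^+ 2 - (\sum_i dot z (u i)) ^+ 2 / (d.+1)%:R).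
Proof.
set s := z *m Umx^T.
have Es : forall i, s ord0 i = dot z (u i).
  by move=> i; rewrite !mxE; apply: eq_bigr => k _; rewrite !mxE.
have -> : dot z z = (s *m Kmx *m s^T) ord0 ord0.
  have -> : s *m Kmx *m s^T = z *m (Umx^T *m Kmx *m Umx) *m z^T.
    by rewrite /s trmx_mul trmxK !mulmxA.
  rewrite UKU mulmx1.
  by rewrite mxE; apply: eq_bigr => k _; rewrite mxE.
rewrite mxE.
have Hin : forall j, \sum_l s ord0 l * Kmx l j
    = 2 * (s ord0 j - (\sum_l s ord0 l) / (d.+1)%:R).
  move=> j.
  have -> : \sum_l s ord0 l * Kmx l j
      = \sum_l (2 * (s ord0 l * (l == j)%:R) - (2 / (d.+1)%:R) * s ord0 l).
    by apply: eq_bigr => l _; rewrite KmxE; ring.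
  rewrite sumrB -mulr_sumr -mulr_sumr.
  have H1 := sum_delta (fun l => s ord0 l) j; rewrite /= in H1; rewrite H1.
  ring.
under eq_bigr => j _ do rewrite [(s *m Kmx) _ _]mxE Hin [s^T _ _]mxE.
set S := \sum_l s ord0 l.
have -> : \sum_j 2 * (s ord0 j - S / (d.+1)%:R) * s ord0 j
  = 2 * (\sum_j s ord0 j ^+ 2) - (2 / (d.+1)%:R) * S * S.
  have E2 : (2 / (d.+1)%:R) * S * S = \sum_j ((2 / (d.+1)%:R) * S) * s ord0 j.
    by rewrite -mulr_sumr.
  rewrite E2 mulr_sumr -sumrB; apply: eq_bigr => j _; ring.
have E3 : \sum_i dot z (u i) ^+ 2 = \sum_i s ord0 i ^+ 2.
  by apply: eq_bigr => i _; rewrite Es.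
have E4 : \sum_i dot z (u i) = S.
  by apply: eq_bigr => i _; rewrite Es.
rewrite E3 E4; field; exact: nP1.
Qed.

Definition qc : 'rV[R]_d := x ord_max + (d.+1)%:R^-1 *: \sum_i u i.
Definition r2 : R := d%:R / (2 * (d.+1)%:R).

Lemma ww : dot ((d.+1)%:R^-1 *: \sum_i u i) ((d.+1)%:R^-1 *: \sum_i u i) = r2.
Proof.
rewrite dotZl dotZr dot_suml.
have E : forall i, dot (u i) (\sum_j u j) = (1 + d%:R) / 2.
  move=> i; rewrite dot_sumr.
  have -> : \sum_j dot (u i) (u j) = \sum_(j < d) (1/2 * (i == j)%:R) + \sum_(j < d) (1/2 : R).
    by rewrite -big_split; apply: eq_bigr => j _; rewrite uu /=; field.
  by rewrite sum_deltaC sumr_const card_ord -mulr_natr; field.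
under eq_bigr => i _ do rewrite E.
rewrite sumr_const card_ord -mulr_natr /r2; field; exact: nP1.
Qed.


Lemma key p : (forall i, dot (x i - p) (x i - p) <= 1) ->
  dot (p - qc) (p - qc) <= r2 /\ (dot (p - qc) (p - qc) = r2 -> exists k, p = x k).
Proof.
move=> Hp.
set z := p - x ord_max.
set N := dot z z.
set S := \sum_i dot z (u i).
set Q := \sum_i dot z (u i) ^+ 2.
have F1 : N = 2 * (Q - S ^+ 2 / (d.+1)%:R) by exact: frame.
have F2 : forall i, 0 <= dot z (u i) - N / 2.
  move=> i; have := Hp (wid i).
  have -> : x (wid i) - p = u i - z by rewrite /u /z; rewrite opprB addrA subrK.
  rewrite dot_sq uu eqxx (dotC (u i)) -/N /=; lra.
have F3 : N <= 1.
  have := Hp ord_max.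
  have -> : x ord_max - p = - z by rewrite /z opprB.
  by rewrite dotNl dotC dotNl opprK.
have F4 : dot (p - qc) (p - qc) = N - 2 * S / (d.+1)%:R + r2.
  have -> : p - qc = z - (d.+1)%:R^-1 *: \sum_i u i by rewrite /qc /z opprD addrA.
  rewrite dot_sq ww dotZr dot_sumr -/N -/S; field; exact: nP1.
set al := fun i => dot z (u i) - N / 2.
have Hsq := sq_sum al.
have Hc := cross_ge0 F2.
have EP : \sum_i al i = S - d%:R * N / 2.
  by rewrite /al /= sumrB sumr_const card_ord -[_ *+ d]mulr_natr -/S; field.
have EQ : \sum_i al i ^+ 2 = Q - N * S + d%:R * N ^+ 2 / 4.
  have -> : \sum_i al i ^+ 2 = \sum_i (dot z (u i) ^+ 2 - N * dot z (u i) + N ^+ 2 / 4).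
    by apply: eq_bigr => i _; rewrite /al; field.
  by rewrite big_split sumrB /= -mulr_sumr sumr_const card_ord -[_ *+ d]mulr_natr -/S -/Q; field.
have Pge : 0 <= \sum_i al i by apply: sumr_ge0 => i _; exact: F2.
rewrite -/al in Hsq.
set P := \sum_i al i in Hsq EP Pge.
set A2 := \sum_i al i ^+ 2 in Hsq EQ.
set C := \sum_a \sum_(b | b != a) al a * al b in Hsq Hc.
set D := d%:R : R.
have HD : 0 <= D by exact: ler0n.
have Hn : (d.+1)%:R = D + 1 by rewrite -natr1.
rewrite Hn in F1 F4.
have HQ : Q = N / 2 + S ^+ 2 / (D + 1).
  rewrite F1; field; apply/eqP; lra.
set X := 2 * S - (D + 1) * N.
have Iden : 4 * (D + 1) * (C + 2 * P * ((1 - N) / 2)) = D * X ^+ 2 + 2 * (D + 1) * X.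
  have -> : C = P ^+ 2 - A2 by rewrite Hsq; ring.
  rewrite EQ EP HQ /X; field; apply/eqP; lra.
have Hb : 0 <= (1 - N) / 2 by lra.
have HCP : 0 <= C + 2 * P * ((1 - N) / 2).
  by apply: addr_ge0 => //; apply: mulr_ge0 => //; apply: mulr_ge0.
have HX1 : -1 <= X by rewrite /X; lra.
have HX : 0 <= X.
  have H4 : 0 <= D * X ^+ 2 + 2 * (D + 1) * X by rewrite -Iden; apply: mulr_ge0 => //; lra.
  rewrite leNgt; apply/negP => Hlt.
  have H5 : 0 < D * X + 2 * (D + 1) by nra.
  have H6 : X * (D * X + 2 * (D + 1)) < 0 by rewrite pmulr_llt0.
  have : X * (D * X + 2 * (D + 1)) = D * X ^+ 2 + 2 * (D + 1) * X by ring.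
  lra.
split.
  rewrite F4.
  have Hn0 : 0 < D + 1 by lra.
  suff : N - 2 * S / (D + 1) <= 0 by lra.
  have -> : N - 2 * S / (D + 1) = - (X / (D + 1)).
    by rewrite /X; field; apply/eqP; lra.
  by rewrite oppr_le0; apply: divr_ge0 => //; lra.
move=> Heq.
have Hn0 : D + 1 != 0 by apply/eqP; lra.
have X0 : X = 0.
  have E1 : X = - (D + 1) * (N - 2 * S / (D + 1)) by rewrite /X; field.
  by rewrite E1 (_ : N - 2 * S / (D + 1) = 0) ?mulr0 //; lra.
rewrite X0 in Iden.
have Iden0 : 4 * (D + 1) * (C + 2 * P * ((1 - N) / 2)) = 0 by rewrite Iden; ring.
have HCP0 : C + 2 * P * ((1 - N) / 2) = 0.
  move/eqP: Iden0; rewrite mulf_eq0 => /orP [|/eqP //].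
  by rewrite mulf_eq0 => /orP [/eqP H|/eqP H]; lra.
have HPb : 0 <= 2 * P * ((1 - N) / 2) by apply: mulr_ge0 => //; apply: mulr_ge0.
have C0 : C = 0 by lra.
have Pb0 : P * (1 - N) = 0 by lra.
have Psum : P + (1 - N) / 2 = 1 / 2 by rewrite EP; move: X0; rewrite /X; lra.
case: (eqVneq N 1) => [N1|N1].
  have P12 : P = 1 / 2 by rewrite N1 in Psum; lra.
  case: (pickP (fun k => al k != 0)) => [k Hk|Hnz]; last first.
    have : P = 0 by rewrite /P big1 // => i _; move: (Hnz i) => /negbFE/eqP.
    lra.
  have Hin : forall a, true -> 0 <= \sum_(b | b != a) al a * al b.
    by move=> a _; apply: sumr_ge0 => b _; apply: mulr_ge0; apply: F2.
  have Ck := psumr_eq0P Hin C0 (i:=k) isT.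
  have Hin2 : forall b, b != k -> 0 <= al k * al b by move=> b _; apply: mulr_ge0; apply: F2.
  have Hb0 : forall b, b != k -> al b = 0.
    move=> b Hbk; have := psumr_eq0P Hin2 Ck Hbk.
    by move/eqP; rewrite mulf_eq0 (negbTE Hk) /= => /eqP.
  have Pk : P = al k.
    by rewrite /P (bigD1 k) //= big1 ?addr0 // => b Hbk; apply: Hb0.
  have sk : dot z (u k) = 1 by move: P12; rewrite Pk /al /= N1; lra.
  exists (wid k).
  have : dot (u k - z) (u k - z) = 0.
    by rewrite dot_sq uu eqxx (dotC (u k)) sk -/N N1 /=; lra.
  move/dot_eq0/subr0_eq => Huz.
  by rewrite -(subrK (x ord_max) p) -/z -Huz /u subrK.
have P0 : P = 0.
  move/eqP: Pb0; rewrite mulf_eq0 subr_eq0 => /orP [/eqP //|/eqP H].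
  by rewrite H eqxx in N1.
have N0 : N = 0 by lra.
exists ord_max.
by apply/subr0_eq/dot_eq0.
Qed.

End Frame.

Lemma dot0 (R : realType) d (v : 'rV[R]_d) : dot 0 v = 0.
Proof. by rewrite /dot big1 // => k _; rewrite mxE mul0r. Qed.

Lemma spread (R : realType) d (y : 'I_d.+1 -> 'rV[R]_d) (q : 'rV[R]_d) :
  (forall i j, i != j -> dot (y i - y j) (y i - y j) = 1) ->
  d%:R / 2 <= \sum_j dot (y j - q) (y j - q).
Proof.
move=> Hy.
set a := fun j => y j - q.
set T := \sum_j dot (a j) (a j).
have E1 : forall j, \sum_l dot (y j - y l) (y j - y l) = d%:R.
  move=> j; rewrite (bigD1 j) //= subrr dot0 add0r.
  rewrite (eq_bigr (fun _ => 1)); last by move=> l Hl; apply: Hy; rewrite eq_sym.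
  by rewrite sumr_const cardC1 card_ord.
have E2 : forall j l, dot (y j - y l) (y j - y l)
    = dot (a j) (a j) - 2 * dot (a j) (a l) + dot (a l) (a l).
  by move=> j l; rewrite -dot_sq /a opprB addrA subrK.
have E3 : \sum_j \sum_l dot (y j - y l) (y j - y l) = d.+1%:R * d%:R.
  by rewrite (eq_bigr (fun _ => d%:R)) ?sumr_const ?card_ord ?mulr_natl // => j _; rewrite E1.
have E4 : \sum_j \sum_l dot (y j - y l) (y j - y l)
    = 2 * d.+1%:R * T - 2 * dot (\sum_j a j) (\sum_j a j).
  have -> : \sum_j \sum_l dot (y j - y l) (y j - y l)
      = \sum_j (d.+1%:R * dot (a j) (a j) - 2 * dot (a j) (\sum_l a l) + T).
    apply: eq_bigr => j _.
    under eq_bigr => l _ do rewrite E2.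
    rewrite big_split sumrB /= sumr_const card_ord -[_ *+ d.+1]mulr_natl dot_sumr -mulr_sumr.
    by rewrite -/T.
  rewrite big_split sumrB /= sumr_const card_ord -[_ *+ d.+1]mulr_natr -mulr_sumr -mulr_sumr -/T.
  rewrite dot_suml; ring.
have Hs := dot_ge0 (\sum_j a j).
have Hd : 0 < d.+1%:R :> R by exact: ltr0Sn.
rewrite -/T.
have : d.+1%:R * d%:R <= d.+1%:R * (2 * T) :> R by rewrite -E3 E4; lra.
rewrite ler_pM2l // => H; lra.
Qed.

Lemma le_sum2 (R : realType) m (F : 'I_m -> 'I_m -> R) :
  (forall i j, 0 <= F i j) -> forall a b, F a b <= \sum_i \sum_j F i j.
Proof.
move=> Hf a b.
have H1 : F a b <= \sum_j F a j.
  rewrite (bigD1 b) //= lerDl; apply: sumr_ge0 => j _; exact: Hf.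
have H2 : \sum_j F a j <= \sum_i \sum_j F i j.
  rewrite [X in _ <= X](bigD1 a) //= lerDl.
  apply: sumr_ge0 => i _; apply: sumr_ge0 => j _; exact: Hf.
exact: le_trans H1 H2.
Qed.

Local Open Scope classical_set_scope.

Lemma diam_bound (R : realType) d (x y : 'I_d.+1 -> 'rV[R]_d) :
  diam (range x `|` range y) = 1 ->
  forall p q, (range x `|` range y) p -> (range x `|` range y) q -> edist p q <= 1.
Proof.
move=> Hd p q Hp Hq; rewrite -Hd /diam.
set F := fun i j => edist (x i) (x j) + edist (x i) (y j) + edist (y i) (x j) + edist (y i) (y j).
have Fge : forall i j, 0 <= F i j.
  by move=> i j; rewrite /F !addr_ge0 // sqrtr_ge0.
have Hub : forall p q, (range x `|` range y) p -> (range x `|` range y) q ->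
    edist p q <= \sum_i \sum_j F i j.
  move=> p' q' Hp' Hq'.
  have H4 : forall i j, edist (x i) (x j) <= F i j /\ edist (x i) (y j) <= F i j /\
      edist (y i) (x j) <= F i j /\ edist (y i) (y j) <= F i j.
    move=> i j; rewrite /F.
    have := sqrtr_ge0 (\sum_(k < d) (x i ord0 k - x j ord0 k) ^+ 2).
    have := sqrtr_ge0 (\sum_(k < d) (x i ord0 k - y j ord0 k) ^+ 2).
    have := sqrtr_ge0 (\sum_(k < d) (y i ord0 k - x j ord0 k) ^+ 2).
    have := sqrtr_ge0 (\sum_(k < d) (y i ord0 k - y j ord0 k) ^+ 2).
    rewrite /edist; lra.
  case: Hp' => [[a _ <-]|[a _ <-]]; case: Hq' => [[b _ <-]|[b _ <-]];
    have [H1 [H2 [H3 H5]]] := H4 a b; have H6 := le_sum2 Fge a b;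
    by [exact: le_trans H1 H6 | exact: le_trans H2 H6 | exact: le_trans H3 H6 | exact: le_trans H5 H6].
apply: ub_le_sup.
  exists (\sum_i \sum_j F i j) => e [p' Hp' [q' Hq' <-]].
  exact: Hub.
by exists p => //; exists q.
Qed.

Lemma incl (R : realType) d (x y : 'I_d.+1 -> 'rV[R]_d) :
  (forall i j, i != j -> dot (x i - x j) (x i - x j) = 1) ->
  (forall i j, i != j -> dot (y i - y j) (y i - y j) = 1) ->
  (forall i j, dot (x i - y j) (x i - y j) <= 1) ->
  forall j, exists i, y j = x i.
Proof.
move=> Hx Hy H.
set q := qc x.
have K := fun j => key Hx (H^~ j).
have Sp := spread q Hy.
set f := fun j => dot (y j - q) (y j - q).
have Hf : forall j, true -> 0 <= r2 R d - f j by move=> j _; rewrite subr_ge0; case: (K j).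
have Hs : \sum_j (r2 R d - f j) = 0.
  apply/eqP; rewrite eq_le; apply/andP; split; last by apply: sumr_ge0.
  rewrite sumrB sumr_const card_ord /r2 -[_ *+ d.+1]mulr_natr.
  have -> : d%:R / (2 * d.+1%:R) * d.+1%:R = d%:R / 2 :> R.
    by field; exact: nP1.
  rewrite subr_le0; exact: Sp.
move=> j; have := psumr_eq0P Hf Hs (i:=j) isT.
move/eqP; rewrite subr_eq0 eq_sym => /eqP Hj.
by case: (K j) => _ /(_ Hj).
Qed.

Lemma reg_dot (R : realType) d (x : 'I_d.+1 -> 'rV[R]_d) :
  regular_unit_simplex x -> forall i j, i != j -> dot (x i - x j) (x i - x j) = 1.
Proof.
move=> Hx i j Hij; have := Hx i j Hij; rewrite edistE => H.
by rewrite -(sqr_sqrtr (dot_ge0 (x i - x j))) H expr1n.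
Qed.

Lemma edist_dot (R : realType) d (u v : 'rV[R]_d) :
  edist u v <= 1 -> dot (u - v) (u - v) <= 1.
Proof.
rewrite edistE => H.
rewrite -(sqr_sqrtr (dot_ge0 (u - v))).
have := sqrtr_ge0 (dot (u - v) (u - v)).
move: H; set t := Num.sqrt _ => H H0; nra.
Qed.

Theorem mainTheorem6 (R : realType) (d : nat)
  (x y : 'I_d.+1 -> 'rV[R]_d) :
  regular_unit_simplex x -> regular_unit_simplex y ->
  diam (range x `|` range y) = 1 ->
  range x = range y.
Proof.
move=> Hx Hy Hd.
have B := diam_bound Hd.
have Bxy : forall i j, dot (x i - y j) (x i - y j) <= 1.
  move=> i j; apply: edist_dot; apply: B.
  - by left; exists i.
  - by right; exists j.
have Byx : forall i j, dot (y i - x j) (y i - x j) <= 1.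
  move=> i j; apply: edist_dot; apply: B.
  - by right; exists i.
  - by left; exists j.
have I1 := incl (reg_dot Hx) (reg_dot Hy) Bxy.
have I2 := incl (reg_dot Hy) (reg_dot Hx) Byx.
apply/seteqP; split => p [i _ <-].
- by have [j ->] := I2 i; exists j.
- by have [j ->] := I1 i; exists j.
Qed.
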